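(* Let $n\geq1$ and let $a_1,\ldots,a_n$ be positive real numbers. Let $A\subset\mathbb{R}^n$ be the ray emanating from $0$ and passing through $(a_1,\ldots,a_n)$. Then there exists an infinite sequence of points $x_1,x_2,\ldots$ in $\mathbb{Z}^n$ such that $x_1$ is a standard coordinate vector, $x_{i+1}-x_i$ is a standard coordinate vector for every $i$, and each $x_i$ is within Euclidean distance $\sqrt{2n}$ of $A$.
   Context: A standard coordinate vector is one of the standard basis vectors $e_1,\ldots,e_n$ of $\mathbb{R}^n$. *)

(* Defs.v *)
From mathcomp Require Import all_boot all_order all_algebra.
From mathcomp Require Import reals.
Set Implicit Arguments. Unset Strict Implicit. Unset Printing Implicit Defensive.
Import Order.TTheory GRing.Theory Num.Theory.
Local Open Scope ring_scope.

Definition is_std_basis (n : nat) (x : 'rV[int]_n) : Prop :=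
  exists j : 'I_n, x = delta_mx 0 j.

Definition int_to_real (R : realType) (n : nat) (x : 'rV[int]_n) : 'rV[R]_n :=
  map_mx (fun z : int => z%:~R) x.

Definition euclid_dist (R : realType) (n : nat) (x y : 'rV[R]_n) : R :=
  Num.sqrt (\sum_(i < n) (x 0 i - y 0 i) ^+ 2).

Definition ray (R : realType) (n : nat) (a : 'rV[R]_n) : 'rV[R]_n -> Prop :=
  fun p => exists2 t : R, 0 <= t & p = t *: a.

Definition within_dist (R : realType) (n : nat) (S : 'rV[R]_n -> Prop)
  (x : 'rV[R]_n) (r : R) : Prop :=
  exists2 p, S p & euclid_dist x p <= r.

(* Main.v *)
Require Import Defs.
From mathcomp Require Import all_boot all_order all_algebra.
From mathcomp Require Import reals.
From mathcomp Require Import lra.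
Import Order.TTheory GRing.Theory Num.Theory.
Local Open Scope ring_scope.

Section Aux.
Variables (R : realType) (n : nat) (a : 'rV[R]_n) (i0 : 'I_n).
Hypothesis apos : forall i : 'I_n, 0 < a 0 i.

Definition stepj (y : 'I_n -> nat) : 'I_n :=
  Order.arg_min i0 xpredT (fun j => ((y j)%:R + 1) / a 0 j : R).

Fixpoint ys (k : nat) : 'I_n -> nat :=
  match k with
  | 0%N => fun _ => 0%N
  | k.+1 => let y := ys k in let j := stepj y in fun i => (y i + (i == j))%N
  end.

Definition inv (y : 'I_n -> nat) :=
  forall i j, (y i)%:R / a 0 i <= ((y j)%:R + 1) / a 0 j :> R.

Lemma inv_ys k : inv (ys k).
Proof.
elim: k => [|k IH] /= i j.
  by rewrite mul0r divr_ge0 // ?ltW //; lra.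
rewrite /stepj; case: (Order.TotalTheory.arg_minP (fun j => ((ys k j)%:R + 1) / a 0 j : R) (i0:=i0) (P:=xpredT) isT) => m _ Hm.
case: (eqVneq i m) => [->|him]; case: (eqVneq j m) => [->|hjm].
- rewrite ?eqxx ?(negbTE him) ?(negbTE hjm) ?addn0 ?addn1 ?natrD ?natr1 ?natrS ler_pM2r ?invr_gt0 //; lra.
- rewrite ?eqxx ?(negbTE him) ?(negbTE hjm) ?addn0 ?addn1 ?natrD ?natrS; rewrite -?natr1; exact: Hm.
- rewrite ?eqxx ?(negbTE him) ?(negbTE hjm) ?addn0 ?addn1 ?natrD -?natr1; apply: le_trans (IH i m) _.
  rewrite ler_pM2r ?invr_gt0 //; lra.
- by rewrite ?(negbTE him) ?(negbTE hjm) ?addn0; apply: IH.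
Qed.
End Aux.

Theorem proposition2p8 (R : realType) (n : nat) (a : 'rV[R]_n) :
  (1 <= n)%N ->
  (forall i : 'I_n, 0 < a 0 i) ->
  exists x : nat -> 'rV[int]_n,
    [/\ is_std_basis (x 0%N),
        (forall i : nat, is_std_basis (x i.+1 - x i)) &
        (forall i : nat,
           within_dist (ray a) (int_to_real R (x i)) (Num.sqrt (2 * n%:R)))].
Proof.
case: n a => [//|n] a _ apos.
pose i0 : 'I_n.+1 := ord0.
have stepE : forall k, exists j, forall i,
    (@ys R _ a i0 k.+1 i = @ys R _ a i0 k i + (i == j))%N.
  by move=> k; exists (@stepj R _ a i0 (@ys R _ a i0 k)).
pose x k : 'rV[int]_n.+1 := \row_i ((@ys R _ a i0 k i)%:Z).
exists (fun k => x k.+1); split.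
- have [j Hj] := stepE 0%N; exists j.
  apply/matrixP => u v; rewrite !mxE Hj /= ord1 eqxx /=. by case: (v == j).
- move=> k; have [j Hj] := stepE k.+1; exists j.
  apply/matrixP => u v; rewrite !mxE Hj ord1 eqxx /= eq_sym PoszD addrAC subrr add0r.
  by case: (v == j).
- move=> k; set y := @ys R _ a i0 k.+1.
  have Hinv := @inv_ys R _ a i0 apos k.+1; rewrite -/y in Hinv.
  set m := Order.arg_max i0 xpredT (fun j => (y j)%:R / a 0 j : R).
  have Hm : forall i, (y i)%:R / a 0 i <= (y m)%:R / a 0 m :> R.
    by rewrite /m; case: (Order.TotalTheory.arg_maxP (fun j => (y j)%:R / a 0 j : R) (i0:=i0) (P:=xpredT) isT) => u _ Hu i; apply: Hu.
  set T := (y m)%:R / a 0 m.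
  exists (T *: a).
    by exists T => //; rewrite divr_ge0 // ltW.
  rewrite /euclid_dist ler_sqrt ?mulr_ge0 ?ler0n //.
  apply: (@le_trans _ _ (\sum_(i < n.+1) 1)).
    apply: ler_sum => i _; rewrite !mxE.
    have h1 := Hm i; have h2 := Hinv m i; rewrite -/T in h2.
    have ai := apos i.
    rewrite ler_pdivrMr // in h1.
    rewrite ler_pdivlMr // in h2.
    have -> : ((y i)%:Z)%:~R = (y i)%:R :> R by [].
    have d0 : 0 <= T * a 0 i - (y i)%:R by rewrite subr_ge0.
    have d1 : T * a 0 i - (y i)%:R <= 1 by rewrite lerBlDr addrC.
    rewrite -sqrrN opprB.
    move: d0 d1; set d := T * a 0 i - _ => d0 d1.
    rewrite expr2 -[X in _ <= X]mulr1; exact: ler_pM.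
  rewrite sumr_const card_ord -[X in X <= _]mul1r.
  rewrite ler_pM2r ?ltr0Sn //; lra.
Qed.
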